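(* Consider the system $\xi^+=F(\xi,u,\omega)$, $\omega\in\Omega(\xi,u)$, with sensor output $\upsilon=H(\xi,u,\omega)$, estimator $\hat\xi(k)=\Phi^\xi_k(\overline\xi,\mathbf u_{0:k-1},\boldsymbol\upsilon_{0:k-1})$, control $u=\hat\kappa(\hat\xi)$, estimation error $\varepsilon(k)=G_\varepsilon(\xi(k))-\hat\xi(k)$, $\overline\varepsilon:=G_\varepsilon(\xi(0))-\overline\xi$, and output $\zeta=G(\hat\xi)$. Suppose $\Phi^\xi_0$ is the identity map and there exist constants $a_1,a_2,a_3,a_4,c_1,c_2,c_3,c_4>0$, a closed set $\mathcal{S}\subseteq\Xi\times\hat\Xi$ that is robustly positively invariant, functions $V:\hat\Xi\to\mathbb{R}_{\ge0}$, $V_\varepsilon:\Xi\times\hat\Xi\to\mathbb{R}_{\ge0}$, and $\sigma,\sigma_\varepsilon\in\mathcal{K}$, such that $\frac{a_4c_4}{a_3c_1}<1$, $\frac{a_4c_4}{a_3c_3}<\frac{c_1}{c_1+c_2}$, and along every closed-loop trajectory with $(\xi(0),\overline\xi)\in\mathcal{S}$, at every time (with $^+$ denoting the next time step): $a_1|\zeta|^2\le V(\hat\xi)\le a_2|\zeta|^2$; $V(\hat\xi^+)\le V(\hat\xi)-a_3|\zeta|^2+a_4|(\varepsilon,\varepsilon^+)|^2+\sigma(|\omega|)$; $c_1|\varepsilon|^2\le V_\varepsilon(\xi,\hat\xi)\le c_2|\varepsilon|^2$; $V_\varepsilon(\xi^+,\hat\xi^+)\le V_\varepsilon(\xi,\hat\xi)-c_3|\varepsilon|^2+c_4|\zeta|^2+\sigma_\varepsilon(|\omega|)$.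 Then the closed-loop system is robustly exponentially stable in $\mathcal{S}$ w.r.t. $\zeta$: there exist $c_\zeta>0$, $\lambda_\zeta\in(0,1)$ and $\sigma_\zeta\in\mathcal{K}$ such that \[ |(\zeta(k),\varepsilon(k))|\le c_\zeta\lambda_\zeta^k|(\zeta(0),\overline\varepsilon)|+\sum_{i=0}^k\lambda_\zeta^i\sigma_\zeta(|\omega(k-i)|) \] for all $k\ge0$ and all closed-loop trajectories with $(\xi(0),\overline\xi)\in\mathcal{S}$.
   Context: $\Xi\subseteq\mathbb{R}^{n_\xi}$, $\hat\Xi\subseteq\mathbb{R}^{n_{\hat\xi}}$, $\Upsilon\subseteq\mathbb{R}^{n_\upsilon}$ are closed, $\mathbb{U}$ is the input set; $F(\xi,u,\omega)\in\Xi$ and $H(\xi,u,\omega)\in\Upsilon$ for $(\xi,u)\in\Xi\times\mathbb{U}$, $\omega\in\Omega(\xi,u)\ni0$; $\Phi^\xi_k:\hat\Xi\times\mathbb{U}^k\times\Upsilon^k\to\hat\Xi$; $\hat\kappa:\hat\Xi\to\mathbb{U}$; $G_\varepsilon:\Xi\to\hat\Xi$; $G:\hat\Xi\to\mathbb{R}^{n_\zeta}$; $\overline\xi\in\hat\Xi$ is the prior guess. A closed-loop trajectory is $(\boldsymbol\xi,\hat{\boldsymbol\xi},\mathbf u,\boldsymbol\omega,\boldsymbol\upsilon)$ with $\omega(k)\in\Omega(\xi(k),u(k))$, $\xi(k+1)=F(\xi(k),u(k),\omega(k))$, $\upsilon(k)=H(\xi(k),u(k),\omega(k))$, $\hat\xi(k)=\Phi^\xi_k(\overline\xi,\mathbf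 u_{0:k-1},\boldsymbol\upsilon_{0:k-1})$, $u(k)=\hat\kappa(\hat\xi(k))$. A closed set $\mathcal{S}$ is robustly positively invariant if every closed-loop trajectory with $(\xi(0),\overline\xi)\in\mathcal{S}$ satisfies $(\xi(k),\hat\xi(k))\in\mathcal{S}$ for all $k$. $\mathcal{K}$: continuous strictly increasing functions $\mathbb{R}_{\ge0}\to\mathbb{R}_{\ge0}$ vanishing at $0$. *)

(* Defs.v *)
From HB Require Import structures.
From mathcomp Require Import all_boot all_order all_algebra.
From mathcomp Require Import all_classical all_reals all_analysis.
Set Implicit Arguments. Unset Strict Implicit. Unset Printing Implicit Defensive.
Import Order.TTheory GRing.Theory Num.Theory.
Import numFieldNormedType.Exports.
Local Open Scope classical_set_scope.
Local Open Scope ring_scope.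

Definition enorm (R : realType) (n : nat) (x : 'rV[R]_n) : R :=
  Num.sqrt (\sum_(i < n) x ord0 i ^+ 2).

Definition classK (R : realType) (f : R -> R) : Prop :=
  f 0 = 0 /\
  {within [set x : R | 0 <= x], continuous f} /\
  (forall x y : R, 0 <= x -> x < y -> f x < f y).

Definition closed_loop_traj (R : realType) (nx nxh nu nw ny : nat)
  (F : 'rV[R]_nx -> 'rV[R]_nu -> 'rV[R]_nw -> 'rV[R]_nx)
  (H : 'rV[R]_nx -> 'rV[R]_nu -> 'rV[R]_nw -> 'rV[R]_ny)
  (Omega : 'rV[R]_nx -> 'rV[R]_nu -> set 'rV[R]_nw)
  (Phi : forall k : nat, 'rV[R]_nxh -> ('I_k -> 'rV[R]_nu) ->
                         ('I_k -> 'rV[R]_ny) -> 'rV[R]_nxh)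
  (kappa : 'rV[R]_nxh -> 'rV[R]_nu)
  (xbar : 'rV[R]_nxh)
  (xi : nat -> 'rV[R]_nx) (xih : nat -> 'rV[R]_nxh) (u : nat -> 'rV[R]_nu)
  (w : nat -> 'rV[R]_nw) (y : nat -> 'rV[R]_ny) : Prop :=
  forall k : nat,
    w k \in Omega (xi k) (u k) /\
    xi k.+1 = F (xi k) (u k) (w k) /\
    y k = H (xi k) (u k) (w k) /\
    xih k = Phi k xbar (fun i : 'I_k => u i) (fun i : 'I_k => y i) /\
    u k = kappa (xih k).

Definition RPI (R : realType) (nx nxh nu nw ny : nat)
  (F : 'rV[R]_nx -> 'rV[R]_nu -> 'rV[R]_nw -> 'rV[R]_nx)
  (H : 'rV[R]_nx -> 'rV[R]_nu -> 'rV[R]_nw -> 'rV[R]_ny)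
  (Omega : 'rV[R]_nx -> 'rV[R]_nu -> set 'rV[R]_nw)
  (Phi : forall k : nat, 'rV[R]_nxh -> ('I_k -> 'rV[R]_nu) ->
                         ('I_k -> 'rV[R]_ny) -> 'rV[R]_nxh)
  (kappa : 'rV[R]_nxh -> 'rV[R]_nu)
  (S : set ('rV[R]_nx * 'rV[R]_nxh)) : Prop :=
  closed S /\
  forall xbar xi xih u w y,
    closed_loop_traj F H Omega Phi kappa xbar xi xih u w y ->
    S (xi 0%N, xbar) -> forall k, S (xi k, xih k).

(* Main.v *)
Set Warnings "-all".
Require Import Defs.
From HB Require Import structures.
From mathcomp Require Import all_boot all_order all_algebra.
From mathcomp Require Import all_classical all_reals all_analysis.
From mathcomp Require Import ring lra.
Import Order.TTheory GRing.Theory Num.Theory.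
Import numFieldNormedType.Exports.
Local Open Scope classical_set_scope.
Local Open Scope ring_scope.

Lemma enorm_ge0 {R : realType} n (x : 'rV[R]_n) : 0 <= enorm x.
Proof. exact: sqrtr_ge0. Qed.

Lemma enorm_sq {R : realType} n (x : 'rV[R]_n) :
  enorm x ^+ 2 = \sum_(i < n) x ord0 i ^+ 2.
Proof. by rewrite /enorm sqr_sqrtr // sumr_ge0 // => i _; exact: sqr_ge0. Qed.

Lemma enorm_row {R : realType} n1 n2 (a : 'rV[R]_n1) (b : 'rV[R]_n2) :
  enorm (row_mx a b) ^+ 2 = enorm a ^+ 2 + enorm b ^+ 2.
Proof.
rewrite !enorm_sq big_split_ord /=.
by congr (_ + _); apply: eq_bigr => i _; rewrite ?row_mxEl ?row_mxEr.
Qed.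

Lemma enorm_sqrt {R : realType} n (x : 'rV[R]_n) :
  enorm x = Num.sqrt (enorm x ^+ 2).
Proof. by rewrite sqrtr_sqr ger0_norm // enorm_ge0. Qed.

Lemma sqrt_expr {R : realType} (r : R) k : 0 <= r ->
  Num.sqrt (r ^+ k) = Num.sqrt r ^+ k.
Proof.
move=> hr; rewrite -{1}(sqr_sqrtr hr) exprAC sqrtr_sqr ger0_norm ?exprn_ge0 ?sqrtr_ge0 //.
Qed.

Lemma rec_bound {R : realType} (L n : nat -> R) (rho : R) : 0 <= rho ->
  (forall k, L k.+1 <= rho * L k + n k) ->
  forall k, L k <= rho ^+ k * L 0%N + \sum_(i < k) rho ^+ i * n (k - i.+1)%N.
Proof.
move=> hr hs; elim=> [|k IH]; first by rewrite expr0 mul1r big_ord0 addr0.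
apply: le_trans (hs k) _.
rewrite big_ord_recl /= expr0 mul1r subSS subn0.
have E : rho * (rho ^+ k * L 0%N + \sum_(i < k) rho ^+ i * n (k - i.+1)%N) =
   rho ^+ k.+1 * L 0%N + \sum_(i < k) rho ^+ (bump 0 i) * n (k.+1 - (bump 0 i).+1)%N.
  rewrite mulrDr mulrA -exprS mulr_sumr; congr (_ + _).
  by apply: eq_bigr => i _; rewrite /bump /= add1n subSS mulrA -exprS.
have := ler_wpM2l hr IH; rewrite E; lra.
Qed.

Lemma shift_bound {R : realType} (n : nat -> R) (rho : R) k : 0 < rho ->
  (forall j, 0 <= n j) ->
  \sum_(i < k) rho ^+ i * n (k - i.+1)%N <= \sum_(i < k.+1) rho ^+ i * (n (k - i)%N / rho).
Proof.
move=> hr hn; rewrite big_ord_recl /= expr0 mul1r subn0.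
rewrite -[X in X <= _]add0r; apply: lerD; first by apply: divr_ge0; [exact: hn|exact: ltW].
rewrite le_eqVlt; apply/orP; left; apply/eqP; apply: eq_bigr => i _.
rewrite /bump /= add1n exprS; field; exact: lt0r_neq0.
Qed.

Lemma sqrtD_le {R : realType} {a b : R} : 0 <= a -> 0 <= b ->
  Num.sqrt (a + b) <= Num.sqrt a + Num.sqrt b.
Proof.
move=> ha hb.
have hx := sqrtr_ge0 a; have hy := sqrtr_ge0 b.
rewrite -[X in _ <= X]ger0_norm ?addr_ge0 //.
rewrite -sqrtr_sqr ler_sqrt ?sqr_ge0 //.
rewrite -{1}(sqr_sqrtr ha) -{1}(sqr_sqrtr hb).
move: hx hy.
generalize (Num.sqrt a) (Num.sqrt b) => x y hx hy.
rewrite sqrrD.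
have := mulr_ge0 hx hy.
lra.
Qed.

Lemma sqrt_sum_le (R : realType) (n : nat) (f : 'I_n -> R) :
  (forall i, 0 <= f i) ->
  Num.sqrt (\sum_(i < n) f i) <= \sum_(i < n) Num.sqrt (f i).
Proof.
elim: n f => [|n IH] f hf; first by rewrite !big_ord0 sqrtr0.
rewrite !big_ord_recr /=.
have h0 : 0 <= \sum_(i < n) f (widen_ord (leqnSn n) i) by apply: sumr_ge0 => i _; apply: hf.
apply: le_trans (sqrtD_le h0 (hf ord_max)) _.
by rewrite lerD2r; apply: IH.
Qed.

Lemma step_ineq (R : realType) (a2 a3 a4 c1 c2 c3 c4 nu m rho K gam
   Vk Vk1 Wk Wk1 z e e1 s se : R) :
  0 < a2 -> 0 < a4 -> 0 < c1 -> 0 < c2 -> 0 < nu ->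
  m = nu + a4 / c1 -> 
  gam <= a3 - m * c4 -> gam <= m * c3 - a4 - a4 * c2 / c1 -> 0 < gam ->
  a2 <= K -> nu * c2 <= K ->
  1 - gam / K <= rho ->
  0 <= z -> 0 <= e ->
  0 <= Vk + nu * Wk ->
  Vk <= a2 * z ->
  Vk1 <= Vk - a3 * z + a4 * (e + e1) + s ->
  Wk <= c2 * e -> c1 * e1 <= Wk1 ->
  Wk1 <= Wk - c3 * e + c4 * z + se ->
  Vk1 + nu * Wk1 <= rho * (Vk + nu * Wk) + (s + m * se).
Proof.
move=> ha2 ha4 hc1 hc2 hnu hm hg1 hg2 hg hK1 hK2 hrho hz he hL hV hV1 hW hW1 hW2.
have hK : 0 < K by apply: lt_le_trans hK1.
have hmpos : 0 <= m by rewrite hm; apply: addr_ge0; [exact: ltW|apply: divr_ge0; exact: ltW].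
have s1 : a4 * e1 <= a4 / c1 * Wk1.
  have := ler_wpM2l (divr_ge0 (ltW ha4) (ltW hc1)) hW1.
  by move=> h; apply: le_trans h; rewrite mulrA divfK ?gt_eqF.
have s2 := ler_wpM2l hmpos hW2.
have s3 : a4 / c1 * Wk <= a4 * c2 / c1 * e.
  have := ler_wpM2l (divr_ge0 (ltW ha4) (ltW hc1)) hW.
  by move=> h; apply: le_trans h _; rewrite le_eqVlt; apply/orP; left; apply/eqP; ring.
have s4 : gam * (z + e) <= (a3 - m * c4) * z + (m * c3 - a4 - a4 * c2 / c1) * e.
  rewrite mulrDr; apply: lerD; apply: ler_wpM2r => //.
have s5 : Vk + nu * Wk <= K * (z + e).
  have t1 : a2 * z <= K * z by apply: ler_wpM2r.
  have t2 : nu * Wk <= nu * c2 * e by rewrite -mulrA; apply: ler_wpM2l => //; exact: ltW.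
  have t3 : nu * c2 * e <= K * e by apply: ler_wpM2r.
  rewrite mulrDr; lra.
have s6 : gam / K * (Vk + nu * Wk) <= gam * (z + e).
  rewrite mulrAC ler_pdivrMr // -mulrA [(z + e) * K]mulrC.
  by apply: ler_wpM2l => //; exact: ltW.
have s7 : (1 - gam / K) * (Vk + nu * Wk) <= rho * (Vk + nu * Wk) by apply: ler_wpM2r.
rewrite hm in s1 s2 s4 *.
lra.
Qed.

Lemma classK_ge0 {R : realType} (f : R -> R) x : classK f -> 0 <= x -> 0 <= f x.
Proof.
move=> [f0 [_ fi]] hx; case: (ltrgtP 0 x) => [h||h].
- by rewrite -f0; apply: ltW; apply: fi.
- by move=> h; move: hx; rewrite leNgt h.
- by rewrite -h f0.
Qed.

Lemma classK_comb {R : realType} (f g : R -> R) (m p q : R) :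
  classK f -> classK g -> 0 < m -> 0 < p -> 0 < q ->
  classK (fun s => Num.sqrt ((f s + m * g s) / p / q)).
Proof.
move=> hf hg hm hp hq.
have hf' := hf; have hg' := hg.
case: hf' => [f0 [fc fi]]; case: hg' => [g0 [gc gi]].
split; first by rewrite f0 g0 mulr0 addr0 !mul0r sqrtr0.
split.
  move=> x; apply: continuous_comp; last exact: sqrt_continuous.
  apply: cvgMl; apply: cvgMl; apply: cvgD; first exact: fc.
  by apply: cvgMr; exact: gc.
move=> x y hx hxy.
have hy : 0 <= y by apply: ltW; apply: le_lt_trans hxy.
have h1 : (f x + m * g x) / p / q < (f y + m * g y) / p / q.
  rewrite ltr_pM2r ?invr_gt0 // ltr_pM2r ?invr_gt0 //.
  apply: ltr_leD; first exact: fi.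
  by rewrite ler_pM2l //; apply: ltW; apply: gi.
have h0 : 0 <= (f x + m * g x) / p / q.
  apply: divr_ge0; last exact: ltW.
  apply: divr_ge0; last exact: ltW.
  by apply: addr_ge0; [exact: classK_ge0|apply: mulr_ge0; [exact: ltW|exact: classK_ge0]].
by rewrite ltr_sqrt //; apply: le_lt_trans h1.
Qed.

Theorem theorem3 (R : realType) (nx nxh nu nw ny nz : nat)
  (Xi : set 'rV[R]_nx) (Xih : set 'rV[R]_nxh) (Ups : set 'rV[R]_ny)
  (U : set 'rV[R]_nu)
  (F : 'rV[R]_nx -> 'rV[R]_nu -> 'rV[R]_nw -> 'rV[R]_nx)
  (H : 'rV[R]_nx -> 'rV[R]_nu -> 'rV[R]_nw -> 'rV[R]_ny)
  (Omega : 'rV[R]_nx -> 'rV[R]_nu -> set 'rV[R]_nw)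
  (Phi : forall k : nat, 'rV[R]_nxh -> ('I_k -> 'rV[R]_nu) ->
                         ('I_k -> 'rV[R]_ny) -> 'rV[R]_nxh)
  (kappa : 'rV[R]_nxh -> 'rV[R]_nu)
  (Geps : 'rV[R]_nx -> 'rV[R]_nxh)
  (G : 'rV[R]_nxh -> 'rV[R]_nz)
  (* standing assumptions *)
  (hXi : closed Xi) (hXih : closed Xih) (hUps : closed Ups)
  (hOmega0 : forall x v, Xi x -> U v -> Omega x v 0)
  (hF : forall x v o, Xi x -> U v -> Omega x v o -> Xi (F x v o))
  (hH : forall x v o, Xi x -> U v -> Omega x v o -> Ups (H x v o))
  (hPhi : forall k x us ys, Xih x -> (forall i, U (us i)) ->
            (forall i, Ups (ys i)) -> Xih (Phi k x us ys))
  (hkappa : forall x, Xih x -> U (kappa x))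
  (hGeps : forall x, Xi x -> Xih (Geps x))
  (* hypotheses of the theorem *)
  (hPhi0 : forall x us ys, Phi 0%N x us ys = x)
  (a1 a2 a3 a4 c1 c2 c3 c4 : R)
  (ha1 : 0 < a1) (ha2 : 0 < a2) (ha3 : 0 < a3) (ha4 : 0 < a4)
  (hc1 : 0 < c1) (hc2 : 0 < c2) (hc3 : 0 < c3) (hc4 : 0 < c4)
  (S : set ('rV[R]_nx * 'rV[R]_nxh))
  (hSsub : forall p, S p -> Xi p.1 /\ Xih p.2)
  (hS : RPI F H Omega Phi kappa S)
  (V : 'rV[R]_nxh -> R) (Veps : 'rV[R]_nx -> 'rV[R]_nxh -> R)
  (hV0 : forall x, Xih x -> 0 <= V x)
  (hVeps0 : forall x x', Xi x -> Xih x' -> 0 <= Veps x x')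
  (sigma sigmae : R -> R) (hsigma : classK sigma) (hsigmae : classK sigmae)
  (hrat1 : a4 * c4 / (a3 * c1) < 1)
  (hrat2 : a4 * c4 / (a3 * c3) < c1 / (c1 + c2))
  (hLyap : forall xbar xi xih u w y,
     closed_loop_traj F H Omega Phi kappa xbar xi xih u w y ->
     S (xi 0%N, xbar) ->
     forall k : nat,
       let zeta := fun j => G (xih j) in
       let eps := fun j => Geps (xi j) - xih j in
       a1 * enorm (zeta k) ^+ 2 <= V (xih k) <= a2 * enorm (zeta k) ^+ 2 /\
       V (xih k.+1) <= V (xih k) - a3 * enorm (zeta k) ^+ 2
                       + a4 * enorm (row_mx (eps k) (eps k.+1)) ^+ 2
                       + sigma (enorm (w k)) /\
       c1 * enorm (eps k) ^+ 2 <= Veps (xi k) (xih k)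
                                <= c2 * enorm (eps k) ^+ 2 /\
       Veps (xi k.+1) (xih k.+1) <= Veps (xi k) (xih k)
                       - c3 * enorm (eps k) ^+ 2 + c4 * enorm (zeta k) ^+ 2
                       + sigmae (enorm (w k))) :
  exists (czeta lzeta : R) (sigmaz : R -> R),
    0 < czeta /\ 0 < lzeta < 1 /\ classK sigmaz /\
    forall xbar xi xih u w y,
      closed_loop_traj F H Omega Phi kappa xbar xi xih u w y ->
      S (xi 0%N, xbar) ->
      forall k : nat,
        enorm (row_mx (G (xih k)) (Geps (xi k) - xih k))
        <= czeta * lzeta ^+ k * enorm (row_mx (G xbar) (Geps (xi 0%N) - xbar))
           + \sum_(i < k.+1) lzeta ^+ i * sigmaz (enorm (w (k - i)%N)).
Proof.
have hc1i : 0 < a4 / c1 by apply: divr_gt0.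
have r1 : a4 / c1 < a3 / c4.
  have h : a4 * c4 < a3 * c1.
    by move: hrat1; rewrite ltr_pdivrMr ?mulr_gt0 // mul1r.
  by rewrite ltr_pdivrMr // mulrAC ltr_pdivlMr.
have r2 : a4 * (c1 + c2) / (c1 * c3) < a3 / c4.
  have h : a4 * c4 * (c1 + c2) < c1 * (a3 * c3).
    by move: hrat2; rewrite ltr_pdivrMr ?mulr_gt0 // mulrAC ltr_pdivlMr ?addr_gt0.
  rewrite ltr_pdivrMr ?mulr_gt0 // mulrAC ltr_pdivlMr //.
  have -> : a4 * (c1 + c2) * c4 = a4 * c4 * (c1 + c2) by ring.
  by have -> : a3 * (c1 * c3) = c1 * (a3 * c3) by ring.
set M := Num.max (a4 / c1) (a4 * (c1 + c2) / (c1 * c3)).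
have hM : M < a3 / c4 by rewrite gt_max r1 r2.
have hM1 : a4 / c1 <= M by rewrite le_max lexx.
have hM2 : a4 * (c1 + c2) / (c1 * c3) <= M by rewrite le_max lexx orbT.
set m := (M + a3 / c4) / 2.
have hm1 : M < m by rewrite /m; lra.
have hm2 : m < a3 / c4 by rewrite /m; lra.
set nuc := m - a4 / c1.
have hnu : 0 < nuc by rewrite /nuc; lra.
have hmpos : 0 < m by lra.
have hal : 0 < a3 - m * c4 by rewrite subr_gt0 -ltr_pdivlMr.
have hbe : 0 < m * c3 - a4 - a4 * c2 / c1.
  have h1 : a4 * (c1 + c2) / (c1 * c3) * c3 < m * c3 by rewrite ltr_pM2r //; lra.
  have h2 : a4 * (c1 + c2) / (c1 * c3) * c3 = a4 + a4 * c2 / c1.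
    by field; apply/andP; split; apply: lt0r_neq0.
  lra.
set gam := Num.min (a3 - m * c4) (m * c3 - a4 - a4 * c2 / c1).
have hg : 0 < gam by rewrite lt_min hal hbe.
have hg1 : gam <= a3 - m * c4 by rewrite ge_min lexx.
have hg2 : gam <= m * c3 - a4 - a4 * c2 / c1 by rewrite ge_min lexx orbT.
set K := Num.max a2 (nuc * c2).
have hK1 : a2 <= K by rewrite le_max lexx.
have hK2 : nuc * c2 <= K by rewrite le_max lexx orbT.
have hK : 0 < K by apply: lt_le_trans hK1.
set rho := Num.max (1 - gam / K) (1 / 2).
have hr1 : 1 - gam / K <= rho by rewrite le_max lexx.
have hr2 : 1 / 2 <= rho by rewrite le_max lexx orbT.
have hr0 : 0 < rho by lra.
have hgK : 0 < gam / K by apply: divr_gt0.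
have hrl : rho < 1 by rewrite gt_max; apply/andP; split; lra.
set kap := Num.min a1 (nuc * c1).
have hk0 : 0 < kap by rewrite lt_min ha1 mulr_gt0.
have hk1 : kap <= a1 by rewrite ge_min lexx.
have hk2 : kap <= nuc * c1 by rewrite ge_min lexx orbT.
exists (Num.sqrt (K / kap)), (Num.sqrt rho),
  (fun s => Num.sqrt ((sigma s + m * sigmae s) / kap / rho)).
split; first by rewrite sqrtr_gt0 divr_gt0.
split.
  rewrite sqrtr_gt0 hr0 /=.
  by rewrite -[X in _ < X]sqrtr1 ltr_sqrt ?ltr01.
split; first exact: classK_comb.
move=> xbar xi xih u w y htr hS0 k.
have hx0 : xih 0%N = xbar by have [_ [_ [_ [h _]]]] := htr 0%N; rewrite h hPhi0.
pose z j := enorm (G (xih j)) ^+ 2.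
pose e j := enorm (Geps (xi j) - xih j) ^+ 2.
pose L j := V (xih j) + nuc * Veps (xi j) (xih j).
pose nn j := (sigma (enorm (w j)) + m * sigmae (enorm (w j))) / kap.
pose L' j := L j / kap.
have hz j : 0 <= z j by apply: exprn_ge0; exact: enorm_ge0.
have he j : 0 <= e j by apply: exprn_ge0; exact: enorm_ge0.
have hLy j := hLyap _ _ _ _ _ _ htr hS0 j.
have hlow j : kap * (z j + e j) <= L j.
  have := hLy j; cbv zeta.
  move=> [/andP [hV1 _] [_ [/andP [hW1 _] _]]].
  have t1 : kap * z j <= a1 * z j by apply: ler_wpM2r.
  have t2 : kap * e j <= nuc * c1 * e j by apply: ler_wpM2r.
  have t3 : nuc * (c1 * e j) <= nuc * Veps (xi j) (xih j) by apply: ler_wpM2l => //; exact: ltW.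
  rewrite /L; rewrite /z /e in t1 t2 t3 *; lra.
have hLnn j : 0 <= L j.
  apply: le_trans (hlow j); apply: mulr_ge0; first exact: ltW.
  exact: addr_ge0.
have hup0 : L 0%N <= K * (z 0%N + e 0%N).
  have := hLy 0%N; cbv zeta.
  move=> [/andP [_ hV2] [_ [/andP [_ hW2] _]]].
  have t1 : a2 * z 0%N <= K * z 0%N by apply: ler_wpM2r.
  have t2 : nuc * Veps (xi 0%N) (xih 0%N) <= nuc * (c2 * e 0%N) by apply: ler_wpM2l => //; exact: ltW.
  have t3 : nuc * c2 * e 0%N <= K * e 0%N by apply: ler_wpM2r.
  rewrite /L; rewrite /z /e in t1 t2 t3 *; lra.
have hnn j : 0 <= nn j.
  apply: divr_ge0; last exact: ltW.
  apply: addr_ge0; first by apply: classK_ge0 => //; exact: enorm_ge0.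
  by apply: mulr_ge0; [exact: ltW|apply: classK_ge0 => //; exact: enorm_ge0].
have hstep j : L' j.+1 <= rho * L' j + nn j.
  rewrite /L' /nn mulrA -mulrDl ler_pM2r ?invr_gt0 //.
  have := hLy j; cbv zeta.
  move=> [/andP [_ hV2] [hVs [/andP [_ hW2] hWs]]].
  have := hLy j.+1; cbv zeta.
  move=> [_ [_ [/andP [hW1' _] _]]].
  rewrite enorm_row in hVs.
  apply: (@step_ineq R a2 a3 a4 c1 c2 c3 c4 nuc m rho K gam _ _ _ _ (z j) (e j) (e j.+1)) => //.
  - by rewrite /nuc subrK.
  all: try exact: hLnn.
have rb := rec_bound L' nn rho (ltW hr0) hstep k.
have sb := shift_bound nn rho k hr0 hnn.
have i1 : z k + e k <= L' k by rewrite /L' ler_pdivlMr // mulrC.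
have i0 : L' 0%N <= K / kap * (z 0%N + e 0%N) by rewrite /L' mulrAC ler_pM2r ?invr_gt0.
have hN : forall j, enorm (row_mx (G (xih j)) (Geps (xi j) - xih j)) = Num.sqrt (z j + e j).
  by move=> j; rewrite enorm_sqrt enorm_row.
rewrite -hx0 !hN.
have hsum0 : 0 <= \sum_(i < k.+1) rho ^+ i * (nn (k - i)%N / rho).
  apply: sumr_ge0 => i _; apply: mulr_ge0; first exact: exprn_ge0 (ltW hr0).
  by apply: divr_ge0; [exact: hnn|exact: ltW].
have hL'0 : 0 <= L' 0%N by apply: divr_ge0; [exact: hLnn|exact: ltW].
have c1' : Num.sqrt (z k + e k) <=
   Num.sqrt (rho ^+ k * L' 0%N + \sum_(i < k.+1) rho ^+ i * (nn (k - i)%N / rho)).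
  rewrite ler_sqrt; first lra.
  by apply: addr_ge0 => //; apply: mulr_ge0 => //; exact: exprn_ge0 (ltW hr0).
apply: le_trans c1' _.
apply: le_trans (sqrtD_le _ _) _.
- by apply: mulr_ge0 => //; exact: exprn_ge0 (ltW hr0).
- exact: hsum0.
apply: lerD.
  rewrite sqrtrM ?exprn_ge0 ?(ltW hr0) // sqrt_expr ?(ltW hr0) //.
  rewrite [_ * Num.sqrt rho ^+ k]mulrC -mulrA.
  apply: ler_wpM2l; first exact: exprn_ge0 (sqrtr_ge0 _).
  rewrite -sqrtrM ?divr_ge0 ?(ltW hK) ?(ltW hk0) //.
  by rewrite ler_sqrt // mulr_ge0 ?divr_ge0 ?(ltW hK) ?(ltW hk0) // addr_ge0.
have hf : forall i : 'I_k.+1, 0 <= rho ^+ i * (nn (k - i)%N / rho).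
  move=> i; apply: mulr_ge0; first exact: exprn_ge0 (ltW hr0).
  by apply: divr_ge0; [exact: hnn|exact: ltW].
apply: le_trans (@sqrt_sum_le R k.+1 _ hf) _.
rewrite le_eqVlt; apply/orP; left; apply/eqP; apply: eq_bigr => i _.
by rewrite sqrtrM ?exprn_ge0 ?(ltW hr0) // sqrt_expr ?(ltW hr0).
Qed.
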